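(* Let $d\ge2$ and let $\ell=\overline{xy}$ be a critical leaf of a sibling $\sigma_d$-invariant lamination $\mathcal L$ such that $x$ is periodic under $\sigma_d$. Then $\ell$ is isolated in $\mathcal L$ (it is not a Hausdorff limit of other leaves of $\mathcal L$).
   Context: $\mathbb S$ is the unit circle, $\sigma_d(z)=z^d$. A chord $\overline{ab}$ joins $a,b\in\mathbb S$; distinct chords cross if they meet in the open unit disk; a chord is critical if $a\ne b$ and $\sigma_d(a)=\sigma_d(b)$. A lamination is a family of pairwise non-crossing chords (leaves) containing all points of $\mathbb S$, whose union is closed. It is sibling $\sigma_d$-invariant if (1) images of leaves are leaves; (2) every leaf is the image of some leaf; (3) for every non-critical leaf $\ell$ there exist $d$ pairwise disjoint leaves $\ell_1=\ell,\dots,\ell_d$ with equal $\sigma_d$-images. *)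

(* Defs.v *)
From HB Require Import structures.
From mathcomp Require Import all_boot all_order all_algebra.
From mathcomp Require Import complex.
From mathcomp Require Import all_classical all_reals.
Set Implicit Arguments. Unset Strict Implicit. Unset Printing Implicit Defensive.
Import Order.TTheory GRing.Theory Num.Theory.
Local Open Scope ring_scope.
Local Open Scope complex_scope.

Section Lam.
Variable R : realType.
Local Notation C := R[i].

Definition on_circle (z : C) : Prop := Normc.normc z = 1.
Definition in_open_disk (z : C) : Prop := Normc.normc z < 1.
Definition sigma (d : nat) (z : C) : C := z ^+ d.

Definition seg (a b : C) : set C :=
  fun z => exists t : R, 0 <= t <= 1 /\ z = (1 - t)%:C * a + t%:C * b.

Definition same_chord (a b c e : C) : Prop :=
  (a = c /\ b = e) \/ (a = e /\ b = c).

Definition cross (a b c e : C) : Prop :=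
  ~ same_chord a b c e /\ exists z, seg a b z /\ seg c e z /\ in_open_disk z.

Definition critical (d : nat) (a b : C) : Prop := a <> b /\ sigma d a = sigma d b.

(* a family of chords, given by a relation on endpoints; the chord ab is in
   the family if L a b or L b a *)
Definition leaf (L : C -> C -> Prop) (a b : C) : Prop := L a b \/ L b a.

Definition closed_in_plane (A : set C) : Prop :=
  forall z, (forall e : R, 0 < e -> exists w, A w /\ Normc.normc (z - w) < e) -> A z.

Definition lamination (L : C -> C -> Prop) : Prop :=
  [/\ (forall a b, leaf L a b -> on_circle a /\ on_circle b),
      (forall a b c e, leaf L a b -> leaf L c e -> ~ cross a b c e),
      (forall a, on_circle a -> leaf L a a) &
      closed_in_plane (fun z => exists a b, leaf L a b /\ seg a b z)].

Definition sibling_invariant (d : nat) (L : C -> C -> Prop) : Prop :=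
  [/\ lamination L,
      (forall a b, leaf L a b -> leaf L (sigma d a) (sigma d b)),
      (forall a b, leaf L a b -> exists c e, leaf L c e /\
           same_chord (sigma d c) (sigma d e) a b) &
      (forall a b, leaf L a b -> ~ critical d a b ->
         exists f : 'I_d -> C * C,
           [/\ (forall i, leaf L (f i).1 (f i).2),
               (forall i : 'I_d, nat_of_ord i = 0%N -> same_chord (f i).1 (f i).2 a b),
               (forall i j, i <> j -> forall z, seg (f i).1 (f i).2 z -> seg (f j).1 (f j).2 z -> False) &
               (forall i, same_chord (sigma d (f i).1) (sigma d (f i).2) (sigma d a) (sigma d b))])].

Definition periodic (d : nat) (x : C) : Prop :=
  exists n : nat, (0 < n)%N /\ iter n (sigma d) x = x.

Definition hclose (A B : set C) (e : R) : Prop :=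
  (forall a, A a -> exists b, B b /\ Normc.normc (a - b) <= e) /\
  (forall b, B b -> exists a, A a /\ Normc.normc (a - b) <= e).

Definition hausdorff_limit (u : nat -> C * C) (x y : C) : Prop :=
  forall e : R, 0 < e -> exists N, forall n, (N <= n)%N ->
    hclose (seg (u n).1 (u n).2) (seg x y) e.

Definition isolated (L : C -> C -> Prop) (x y : C) : Prop :=
  ~ exists u : nat -> C * C,
      (forall n, leaf L (u n).1 (u n).2 /\ ~ same_chord (u n).1 (u n).2 x y) /\
      hausdorff_limit u x y.

End Lam.

(* Main.v *)
Require Import Defs.
From HB Require Import structures.
From mathcomp Require Import all_boot all_order all_algebra.
From mathcomp Require Import complex.
From mathcomp Require Import all_classical all_reals.
From mathcomp.algebra_tactics Require Import ring lra.
From mathcomp Require Import zify.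
Set Implicit Arguments. Unset Strict Implicit. Unset Printing Implicit Defensive.
Import Order.TTheory GRing.Theory Num.Theory.
Local Open Scope ring_scope.
Local Open Scope complex_scope.

Section S.
Variable R : realType.
Local Notation C := R[i].
Implicit Types z w a b : C.
Local Notation Re := complex.Re.
Local Notation Im := complex.Im.

Lemma ReD z w : Re (z + w) = Re z + Re w. Proof. by case: z => ? ?; case: w => ? ?. Qed.
Lemma ImD z w : Im (z + w) = Im z + Im w. Proof. by case: z => ? ?; case: w => ? ?. Qed.
Lemma ReN z : Re (- z) = - Re z. Proof. by case: z => ? ?. Qed.
Lemma ImN z : Im (- z) = - Im z. Proof. by case: z => ? ?. Qed.
Lemma ReB z w : Re (z - w) = Re z - Re w. Proof. by case: z => ? ?; case: w => ? ?. Qed.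
Lemma ImB z w : Im (z - w) = Im z - Im w. Proof. by case: z => ? ?; case: w => ? ?. Qed.
Lemma ReM z w : Re (z * w) = Re z * Re w - Im z * Im w. Proof. by case: z => ? ?; case: w => ? ?. Qed.
Lemma ImM z w : Im (z * w) = Re z * Im w + Im z * Re w. Proof. by case: z => a b; case: w => c d /=; ring. Qed.
Lemma ReC (t : R) : Re (t%:C) = t. Proof. by []. Qed.
Lemma ImC (t : R) : Im (t%:C) = 0. Proof. by []. Qed.
Lemma Re1 : Re (1 : C) = 1. Proof. by []. Qed.
Lemma Im1 : Im (1 : C) = 0. Proof. by []. Qed.
Lemma Re0 : Re (0 : C) = 0. Proof. by []. Qed.
Lemma Im0 : Im (0 : C) = 0. Proof. by []. Qed.
Lemma ReJ z : Re (z^*) = Re z. Proof. by case: z => ? ?. Qed.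
Lemma ImJ z : Im (z^*) = - Im z. Proof. by case: z => ? ?. Qed.
Lemma cext z w : Re z = Re w -> Im z = Im w -> z = w.
Proof. by case: z; case: w => /= ? ? ? ? -> ->. Qed.

Definition nsq z := Re z ^+ 2 + Im z ^+ 2.
Lemma normcE z : Normc.normc z = Num.sqrt (nsq z). Proof. by case: z => ? ?. Qed.

Lemma circleE z : on_circle z <-> nsq z = 1.
Proof.
rewrite /on_circle normcE; split => [h|->]; last by rewrite sqrtr1.
have h0 : 0 <= nsq z by rewrite /nsq addr_ge0 // sqr_ge0.
by rewrite -(sqr_sqrtr h0) h expr1n.
Qed.

Lemma ReC' (t : R) z : Re (t%:C * z) = t * Re z. Proof. by rewrite ReM ReC ImC mul0r subr0. Qed.
Lemma ImC' (t : R) z : Im (t%:C * z) = t * Im z. Proof. by rewrite ImM ReC ImC mul0r addr0. Qed.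

Definition side a b z :=
  (Re b - Re a) * (Im z - Im a) - (Im b - Im a) * (Re z - Re a).

Lemma nsq_ge0 z : 0 <= nsq z. Proof. by rewrite /nsq addr_ge0 // sqr_ge0. Qed.

Lemma nsq_eq0 z : nsq z = 0 -> z = 0.
Proof.
rewrite /nsq => h; have h1 : Re z = 0 by nra. have h2 : Im z = 0 by nra.
by apply: cext; rewrite ?h1 ?h2.
Qed.

Lemma nsqB_gt0 z w : z <> w -> 0 < nsq (z - w).
Proof.
move=> hne; rewrite lt_def nsq_ge0 andbT; apply/eqP => /nsq_eq0 /eqP.
by rewrite subr_eq0 => /eqP.
Qed.

Lemma normc_lt1 z : nsq z < 1 -> in_open_disk z.
Proof.
move=> h; rewrite /in_open_disk normcE -sqrtr1 ltr_sqrt //; lra.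
Qed.

Lemma seg_comb a b (t : R) : 0 <= t -> t <= 1 ->
  seg a b ((1 - t)%:C * a + t%:C * b).
Proof. by move=> h0 h1; exists t; split => //; apply/andP. Qed.

Lemma parallel a b w : a <> b -> side a b w = 0 ->
  exists s : R, w = (1 - s)%:C * a + s%:C * b.
Proof.
move=> hab hs; set n := nsq (b - a).
have hn : 0 < n by apply: nsqB_gt0 => /esym.
move: hs; rewrite /side => hs.
set dot := (Re b - Re a) * (Re w - Re a) + (Im b - Im a) * (Im w - Im a).
exists (dot / n).
have hsn : dot / n * n = dot by rewrite divfK // gt_eqF.
have nE : n = (Re b - Re a) ^+ 2 + (Im b - Im a) ^+ 2 by rewrite /n /nsq ReB ImB.
have k1 : (Re w - Re a) * n = (Re b - Re a) * dot.
  apply/eqP; rewrite -subr_eq0; apply/eqP.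
  have -> : (Re w - Re a) * n - (Re b - Re a) * dot = - (Im b - Im a) * ((Re b - Re a) * (Im w - Im a) - (Im b - Im a) * (Re w - Re a)) by rewrite nE /dot; ring.
  by rewrite hs mulr0.
have k2 : (Im w - Im a) * n = (Im b - Im a) * dot.
  apply/eqP; rewrite -subr_eq0; apply/eqP.
  have -> : (Im w - Im a) * n - (Im b - Im a) * dot = (Re b - Re a) * ((Re b - Re a) * (Im w - Im a) - (Im b - Im a) * (Re w - Re a)) by rewrite nE /dot; ring.
  by rewrite hs mulr0.
have hn0 : n != 0 by rewrite gt_eqF.
have e1 : Re w - Re a = (Re b - Re a) * (dot / n) by rewrite mulrA -k1 mulfK.
have e2 : Im w - Im a = (Im b - Im a) * (dot / n) by rewrite mulrA -k2 mulfK.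
apply: cext; rewrite ?ReD ?ImD ?ReC' ?ImC'.
- have -> : Re w = Re a + (Re b - Re a) * (dot / n) by rewrite -e1; ring.
  ring.
- have -> : Im w = Im a + (Im b - Im a) * (dot / n) by rewrite -e2; ring.
  ring.
Qed.

Lemma nsq_comb a b (t : R) : nsq a = 1 -> nsq b = 1 ->
  nsq ((1 - t)%:C * a + t%:C * b) = 1 - t * (1 - t) * nsq (a - b).
Proof.
move=> ha hb.
have e : nsq ((1 - t)%:C * a + t%:C * b) - (1 - t * (1 - t) * nsq (a - b))
   = (1 - t) * (nsq a - 1) + t * (nsq b - 1).
  by rewrite /nsq ?ReD ?ImD ?ReC' ?ImC' ?ReB ?ImB; ring.
by apply/eqP; rewrite -subr_eq0 e ha hb !subrr !mulr0 addr0.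
Qed.

Lemma side_comb a b c e (t : R) :
  side a b ((1 - t)%:C * c + t%:C * e) = (1 - t) * side a b c + t * side a b e.
Proof. by rewrite /side ?ReD ?ImD ?ReC' ?ImC'; ring. Qed.

Lemma side_aa a z : side a a z = 0. Proof. by rewrite /side !subrr !mul0r subrr. Qed.
Lemma side_a a b : side a b a = 0. Proof. by rewrite /side !subrr !mulr0 subrr. Qed.
Lemma side_b a b : side a b b = 0. Proof. rewrite /side; ring. Qed.
Lemma sideN a b z : side b a z = - side a b z. Proof. rewrite /side; ring. Qed.

Lemma line_circle a b z : nsq a = 1 -> nsq b = 1 -> nsq z = 1 -> a <> b ->
  side a b z = 0 -> z = a \/ z = b.
Proof.
move=> ha hb hz hab hs; have [s es] := parallel hab hs.
move: hz; rewrite es nsq_comb // => h.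
have hn : 0 < nsq (a - b) by apply: nsqB_gt0.
have h2 : s * (1 - s) = 0.
  have : s * (1 - s) * nsq (a - b) = 0 by lra.
  by move/eqP; rewrite mulf_eq0 (gt_eqF hn) orbF => /eqP.
have [->|->] : s = 0 \/ s = 1.
  by move: h2 => /eqP; rewrite mulf_eq0 subr_eq0 => /orP[/eqP|/eqP]; auto.
- by left; rewrite subr0 mul1r mul0r addr0.
- by right; rewrite subrr mul0r add0r mul1r.
Qed.

Lemma cross_sides a b c e : nsq a = 1 -> nsq b = 1 -> nsq c = 1 -> nsq e = 1 ->
  side a b c * side a b e < 0 -> cross a b c e.
Proof.
move=> ha hb hc he hneg.
set sc := side a b c in hneg *; set se := side a b e in hneg *.
have hab : a <> b.
  by move=> eab; move: hneg; rewrite /sc /se eab !side_aa mul0r ltxx.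
have hce : c <> e by move=> ece; move: hneg; rewrite /sc /se ece; nra.
split.
  case=> [[eac ebe]|[eae ebc]].
  - by move: hneg; rewrite /sc eac side_a mul0r ltxx.
  - by move: hneg; rewrite /sc ebc side_b mul0r ltxx.
set D := sc - se.
have hD : D != 0.
  rewrite /D subr_eq0; apply/eqP => h; rewrite h in hneg; nra.
set t := sc / D.
have htD : t * D = sc by rewrite /t divfK.
have hD2 : 0 < D ^+ 2 by rewrite lt_def sqrf_eq0 hD sqr_ge0.
have ht0 : 0 < t.
  have : 0 < t * D ^+ 2 by rewrite expr2 mulrA htD /D; nra.
  by rewrite pmulr_lgt0.
have ht1 : t < 1.
  have : 0 < (1 - t) * D ^+ 2.
    by rewrite mulrBl mul1r expr2 mulrA htD /D; nra.
  by rewrite pmulr_lgt0 // subr_gt0.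
exists ((1 - t)%:C * c + t%:C * e); split; last split.
- have hw : side a b ((1 - t)%:C * c + t%:C * e) = 0.
    rewrite side_comb -/sc -/se.
    have : t * (sc - se) = sc by exact: htD.
    lra.
  have [s hs] := parallel hab hw.
  have hn : 0 < nsq (a - b) by apply: nsqB_gt0.
  have hw1 : nsq ((1 - t)%:C * c + t%:C * e) < 1.
    rewrite nsq_comb //.
    have h1t : 0 < 1 - t by lra.
    have := mulr_gt0 (mulr_gt0 ht0 h1t) (nsqB_gt0 hce); lra.
  move: hw1; rewrite hs nsq_comb // => hw1.
  have hs0 : 0 < s * (1 - s) by nra.
  exists s; split => //; apply/andP; split; nra.
- by apply: seg_comb; lra.
- apply: normc_lt1; rewrite nsq_comb //.
  have h1t : 0 < 1 - t by lra.
  have := mulr_gt0 (mulr_gt0 ht0 h1t) (nsqB_gt0 hce); lra.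
Qed.

Definition ang x z := Im z * Re x - Re z * Im x.
Definition cosr x z := Re z * Re x + Im z * Im x.

Lemma side_rotE x w t :
  side x w (x * t) = ang x w * (1 - Re t) - Im t * (nsq x - cosr x w).
Proof. by rewrite /side /ang /cosr /nsq ReM ImM; ring. Qed.

Lemma angcos x w : nsq x = 1 -> nsq w = 1 -> ang x w ^+ 2 + cosr x w ^+ 2 = 1.
Proof.
move=> hx hw.
have -> : ang x w ^+ 2 + cosr x w ^+ 2 = nsq x * nsq w by rewrite /ang /cosr /nsq; ring.
by rewrite hx hw mulr1.
Qed.

Lemma side_rot x w t : nsq x = 1 -> nsq w = 1 -> nsq t = 1 -> 0 <= Re t ->
  - (1 - cosr x w) < Im t -> Im t < 1 - cosr x w ->
  (0 < Im t -> side x w (x * t) < 0) /\ (Im t < 0 -> 0 < side x w (x * t)).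
Proof.
move=> hx hw ht hc hl hu; rewrite side_rotE hx.
have hq := angcos hx hw.
move: ht; rewrite /nsq => ht.
set q := ang x w in hq *; set p := cosr x w in hq hl hu *.
set c := Re t in ht hc *; set s := Im t in ht hl hu *.
have hq1 : q ^+ 2 <= 1 by have := sqr_ge0 p; lra.
have hqa : -1 <= q <= 1 by apply/andP; split; nra.
have h1c : 0 <= 1 - c by nra.
have h1c2 : 1 - c <= s ^+ 2 by nra.
split => hs.
- have : q * (1 - c) <= s ^+ 2 by nra.
  have : s ^+ 2 < s * (1 - p) by rewrite expr2; nra.
  lra.
- have : - s ^+ 2 <= q * (1 - c) by nra.
  have : s ^+ 2 < - s * (1 - p) by rewrite expr2; nra.
  lra.
Qed.

Local Notation nc := Normc.normc.

Lemma nc_ge0 z : 0 <= nc z. Proof. by rewrite normcE sqrtr_ge0. Qed.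
Lemma nc_sq z : nc z ^+ 2 = nsq z. Proof. by rewrite normcE sqr_sqrtr // nsq_ge0. Qed.

Lemma Re_le z : - nc z <= Re z <= nc z.
Proof.
have h1 := nc_sq z; have h2 := nc_ge0 z; rewrite /nsq in h1.
apply/andP; split; nra.
Qed.
Lemma Im_le z : - nc z <= Im z <= nc z.
Proof.
have h1 := nc_sq z; have h2 := nc_ge0 z; rewrite /nsq in h1.
apply/andP; split; nra.
Qed.

Lemma nc1 z : nsq z = 1 -> nc z = 1. Proof. by move=> h; rewrite normcE h sqrtr1. Qed.

Lemma nsq_expr u k : nsq u = 1 -> nsq (u ^+ k) = 1.
Proof.
move=> hu; have : nc (u ^+ k) = 1.
  elim: k => [|k ih]; first by rewrite expr0; apply: nc1; rewrite /nsq Re1 Im1 expr1n expr0n addr0.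
  by rewrite exprSr Normc.normcM ih nc1 // mulr1.
by move=> h; rewrite -nc_sq h expr1n.
Qed.

Lemma nsqM z w : nsq (z * w) = nsq z * nsq w.
Proof. by rewrite /nsq ReM ImM; ring. Qed.

Lemma nc_pow u k : nsq u = 1 -> nc (u ^+ k - 1) <= k%:R * nc (u - 1).
Proof.
move=> hu; elim: k => [|k ih]; first by rewrite expr0 subrr Normc.normc0 mul0r.
have -> : u ^+ k.+1 - 1 = (u ^+ k - 1) * u + (u - 1) by rewrite exprSr; ring.
apply: le_trans (le_normcD _ _) _.
rewrite Normc.normcM (nc1 hu) mulr1 -nat1r mulrDl mul1r; lra.
Qed.

Lemma pow_sign u (K : nat) (eps : R) : nsq u = 1 -> K%:R * nc (u - 1) <= 1 / 2 ->
  0 < eps * Im u -> forall k, (0 < k)%N -> (k <= K)%N -> 0 < eps * Im (u ^+ k).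
Proof.
move=> hu hK hs; elim => [//|k ih] _ hk.
case: k ih hk => [|k] ih hk; first by rewrite expr1.
have hk1 : (k.+1 <= K)%N by apply: ltnW.
have ih' := ih isT hk1.
have hn := nc_pow k.+1 hu.
have hkK : (k.+1)%:R <= K%:R :> R by rewrite ler_nat.
have hn0 := nc_ge0 (u - 1).
have hre : 1 / 2 <= Re (u ^+ k.+1).
  have := Re_le (u ^+ k.+1 - 1); rewrite ReB Re1 => /andP[h1 _].
  have : k.+1%:R * nc (u - 1) <= K%:R * nc (u - 1) by apply: ler_wpM2r.
  lra.
have hre1 : 1 / 2 <= Re u.
  have := Re_le (u - 1); rewrite ReB Re1 => /andP[h1 _].
  have h1K : 1 <= K%:R :> R by rewrite ler1n (leq_trans _ hk).
  have : 1 * nc (u - 1) <= K%:R * nc (u - 1) by apply: ler_wpM2r.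
  lra.
rewrite exprSr ImM.
have -> : eps * (Re (u ^+ k.+1) * Im u + Im (u ^+ k.+1) * Re u) =
  Re (u ^+ k.+1) * (eps * Im u) + (eps * Im (u ^+ k.+1)) * Re u by ring.
nra.
Qed.

Lemma pow_re u (K : nat) k : nsq u = 1 -> K%:R * nc (u - 1) <= 1 / 2 -> (k <= K)%N ->
  1 / 2 <= Re (u ^+ k) /\ - (K%:R * nc (u - 1)) <= Im (u ^+ k) <= K%:R * nc (u - 1).
Proof.
move=> hu hK hk.
have hn := nc_pow k hu.
have hkK : k%:R <= K%:R :> R by rewrite ler_nat.
have hn0 := nc_ge0 (u - 1).
have : k%:R * nc (u - 1) <= K%:R * nc (u - 1) by apply: ler_wpM2r.
have := Re_le (u ^+ k - 1); rewrite ReB Re1 => /andP[h1 _].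
have := Im_le (u ^+ k - 1); rewrite ImB Im1 subr0 => /andP[h2 h3].
move=> h; split; [lra | apply/andP; split; lra].
Qed.

Lemma im0_one u : nsq u = 1 -> 0 < Re u -> Im u = 0 -> u = 1.
Proof.
move=> hu hr hi; move: hu; rewrite /nsq hi => hu.
have hr1 : Re u = 1 by nra.
by apply: cext; rewrite ?hr1 ?hi.
Qed.

Lemma sigmaM d z t : sigma d (z * t) = sigma d z * t ^+ d.
Proof. by rewrite /sigma exprMn. Qed.

Lemma iter_sigmaM d p z t :
  iter p (sigma d) (z * t) = iter p (sigma d) z * t ^+ (d ^ p).
Proof.
elim: p => [|p ih] /=; first by rewrite expn0 expr1.
by rewrite ih sigmaM -exprM expnSr.
Qed.

Lemma leaf_sym (L : C -> C -> Prop) a b : leaf L a b -> leaf L b a.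
Proof. by case=> h; [right|left]. Qed.

Lemma iter_leaf d (L : C -> C -> Prop) p a b :
  (forall a b, leaf L a b -> leaf L (sigma d a) (sigma d b)) ->
  leaf L a b -> leaf L (iter p (sigma d) a) (iter p (sigma d) b).
Proof. by move=> h1 h; elim: p => [|p ih] //=; apply: h1. Qed.

Lemma seg_left a b : seg a b a.
Proof.
exists 0; split; first by rewrite lexx ler01.
by rewrite subr0 mul0r addr0 mul1r.
Qed.
Lemma seg_right a b : seg a b b.
Proof.
exists 1; split; first by rewrite lexx ler01.
by rewrite subrr mul0r add0r mul1r.
Qed.

Lemma comb_subl a b (t : R) : nsq (a - ((1 - t)%:C * a + t%:C * b)) = t ^+ 2 * nsq (a - b).
Proof. by rewrite /nsq !ReB !ImB !ReD !ImD !ReC' !ImC'; ring. Qed.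
Lemma comb_subr a b (t : R) : nsq (b - ((1 - t)%:C * a + t%:C * b)) = (1 - t) ^+ 2 * nsq (a - b).
Proof. by rewrite /nsq !ReB !ImB !ReD !ImD !ReC' !ImC'; ring. Qed.

Lemma seg_near a b x w (e : R) : nsq a = 1 -> nsq b = 1 -> nsq x = 1 ->
  seg a b w -> nc (w - x) <= e -> 0 < e -> e <= 1 ->
  nsq (a - x) <= 10 * e \/ nsq (b - x) <= 10 * e.
Proof.
move=> ha hb hx [t [/andP[ht0 ht1] ->]] hw he0 he1.
set w0 := (1 - t)%:C * a + t%:C * b in hw *.
have hnw : nsq w0 = 1 - t * (1 - t) * nsq (a - b) by rewrite nsq_comb.
have hnw2 : 1 - e <= nc w0.
  have : nc x <= nc w0 + nc (x - w0).
    by have := le_normcD w0 (x - w0); rewrite addrC subrK.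
  have -> : nc (x - w0) = nc (w0 - x) by rewrite -normcN opprB.
  rewrite nc1 //; lra.
have hnw3 : 1 - 2 * e <= nsq w0.
  rewrite -nc_sq; have := nc_ge0 w0; nra.
have hp : t * (1 - t) * nsq (a - b) <= 2 * e by lra.
have hwx : nsq (w0 - x) <= e ^+ 2.
  rewrite -nc_sq; have := nc_ge0 (w0 - x); nra.
have hab := nsq_ge0 (a - b).
have tri : forall p q, nsq (p - x) <= 2 * nsq (p - q) + 2 * nsq (q - x).
  have sq2 : forall al be ga : R, (al - ga) ^+ 2 <= 2 * (al - be) ^+ 2 + 2 * (be - ga) ^+ 2.
    move=> al be ga.
    have e1 : 2 * (al - be) ^+ 2 + 2 * (be - ga) ^+ 2 - (al - ga) ^+ 2 = (al - 2 * be + ga) ^+ 2 by ring.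
    have := sqr_ge0 (al - 2 * be + ga); lra.
  move=> p q; rewrite /nsq !ReB !ImB.
  have := sq2 (Re p) (Re q) (Re x); have := sq2 (Im p) (Im q) (Im x); lra.
have [hth|hth] := lerP t (1 / 2).
- left.
  have h1 : nsq (a - w0) <= 4 * e.
    rewrite /w0 comb_subl.
    have : t ^+ 2 * nsq (a - b) <= 2 * (t * (1 - t) * nsq (a - b)).
      have : t ^+ 2 <= 2 * t * (1 - t) by nra.
      nra.
    lra.
  have : e ^+ 2 <= e by rewrite expr2; nra.
  have := tri a w0; lra.
- right.
  have h1 : nsq (b - w0) <= 4 * e.
    rewrite /w0 comb_subr.
    have : (1 - t) ^+ 2 * nsq (a - b) <= 2 * (t * (1 - t) * nsq (a - b)).
      have : (1 - t) ^+ 2 <= 2 * t * (1 - t) by nra.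
      nra.
    lra.
  have : e ^+ 2 <= e by rewrite expr2; nra.
  have := tri b w0; lra.
Qed.

Lemma roots_bound (d : nat) (c : C) (s : seq C) : (0 < d)%N -> uniq s ->
  (forall z, z \in s -> z ^+ d = c) -> (size s <= d)%N.
Proof.
move=> hd hu hs.
have hp : 'X^d - c%:P != 0 :> {poly C}.
  by rewrite -size_poly_gt0 size_XnsubC.
suff hall : all (root ('X^d - c%:P)) s.
  by have := max_poly_roots hp hall hu; rewrite size_XnsubC.
apply/allP => z /hs hz; by rewrite /root !hornerE hz subrr.
Qed.

Lemma roots_surj (d : nat) (c : C) (P : 'I_d -> C) z : (0 < d)%N -> injective P ->
  (forall i, P i ^+ d = c) -> z ^+ d = c -> exists i, P i = z.
Proof.
move=> hd hP hPc hz.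
case: (boolP [exists i, P i == z]) => [/existsP[i /eqP h]|hn]; first by exists i.
exfalso.
have hu : uniq (z :: [seq P i | i <- enum 'I_d]).
  rewrite /= map_inj_uniq // enum_uniq andbT.
  apply/mapP => [[i _ hi]]; move/negP: hn; apply; apply/existsP; exists i.
  by rewrite hi.
have hall : forall w, w \in z :: [seq P i | i <- enum 'I_d] -> w ^+ d = c.
  by move=> w; rewrite inE => /orP[/eqP ->//|/mapP[i _ ->]]; exact: hPc.
by have := roots_bound hd hu hall; rewrite /= size_map size_enum_ord ltnn.
Qed.

Lemma min_pos (T : eqType) (F : T -> R) (s : seq T) :
  (forall t, t \in s -> 0 < F t) -> exists mu, 0 < mu /\ forall t, t \in s -> mu <= F t.
Proof.
elim: s => [|a s ih] h; first by exists 1; split => //; rewrite ltr01.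
have [|mu [hmu hs]] := ih; first by move=> t ht; apply: h; rewrite inE ht orbT.
have ha : 0 < F a by apply: h; rewrite inE eqxx.
exists (Num.min mu (F a)); split; first by rewrite lt_min hmu ha.
move=> t; rewrite inE => /orP[/eqP ->|ht]; first by rewrite ge_min lexx orbT.
by rewrite ge_min hs.
Qed.

Lemma crotK x a : nsq x = 1 -> x * (a * x^*) = a.
Proof.
move=> hx; move: (hx); rewrite /nsq => hx'.
apply: cext; rewrite !(ReM, ImM, ReJ, ImJ).
- transitivity (Re a * (Re x ^+ 2 + Im x ^+ 2)); first ring.
  by rewrite hx' mulr1.
- transitivity (Im a * (Re x ^+ 2 + Im x ^+ 2)); first ring.
  by rewrite hx' mulr1.
Qed.

Lemma nsqJ z : nsq (z^*) = nsq z. Proof. by rewrite /nsq ReJ ImJ sqrrN. Qed.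

Lemma nsq_rot x a : nsq x = 1 -> nsq a = 1 -> nsq (a * x^*) = 1.
Proof. by move=> hx ha; rewrite nsqM nsqJ hx ha mulr1. Qed.

Lemma nc_rot1 x a : nsq x = 1 -> nc (a * x^* - 1) = nc (a - x).
Proof.
move=> hx.
have -> : a - x = x * (a * x^* - 1) by rewrite mulrBr mulr1 crotK.
by rewrite Normc.normcM (nc1 hx) mul1r.
Qed.

Lemma cosrC x y : cosr x y = cosr y x. Proof. by rewrite /cosr; ring. Qed.

Lemma cosr_near a x y : nsq y = 1 ->
  - nc (a - x) <= cosr a y - cosr x y <= nc (a - x).
Proof.
move=> hy; have h1 := nc_sq (a - x); have h2 := nc_ge0 (a - x).
move: h1 hy; rewrite /nsq /cosr ReB ImB => h1 hy.
set n := nc (a - x) in h1 h2 *.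
have : (Re y * Re a + Im y * Im a - (Re y * Re x + Im y * Im x)) ^+ 2 <= n ^+ 2.
  rewrite h1.
  have -> : (Re y * Re a + Im y * Im a - (Re y * Re x + Im y * Im x)) ^+ 2 =
     (Re y * (Re a - Re x) + Im y * (Im a - Im x)) ^+ 2 by ring.
  have := sqr_ge0 (Re y * (Im a - Im x) - Im y * (Re a - Re x)).
  have -> : (Re a - Re x) ^+ 2 + (Im a - Im x) ^+ 2 =
    ((Re a - Re x) ^+ 2 + (Im a - Im x) ^+ 2) * (Re y ^+ 2 + Im y ^+ 2) by rewrite hy mulr1.
  nra.
move=> h; apply/andP; split; nra.
Qed.

Lemma sign_same (al be ga : R) : 0 < al * be -> ga != 0 ->
  (0 < al * ga) = (0 < be * ga).
Proof.
move=> h hg; have := sqr_ge0 al; have := sqr_ge0 be.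
move=> sb sa; apply/idP/idP => h2; nra.
Qed.

Lemma conjM1 u : nsq u = 1 -> u * u^* = 1.
Proof.
move=> hu; move: hu; rewrite /nsq => hu.
by apply: cext; rewrite !(ReM, ImM, ReJ, ImJ, Re1, Im1); [rewrite -hu; ring | ring].
Qed.


Lemma cs2 (p1 p2 q1 q2 : R) : (p1 * q2 - p2 * q1) ^+ 2 <= (p1 ^+ 2 + p2 ^+ 2) * (q1 ^+ 2 + q2 ^+ 2).
Proof.
have e : (p1 ^+ 2 + p2 ^+ 2) * (q1 ^+ 2 + q2 ^+ 2) - (p1 * q2 - p2 * q1) ^+ 2 = (p1 * q1 + p2 * q2) ^+ 2 by ring.
have := sqr_ge0 (p1 * q1 + p2 * q2); lra.
Qed.

Lemma nsq_sub_le4 z w : nsq z = 1 -> nsq w = 1 -> nsq (z - w) <= 4.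
Proof.
rewrite /nsq ReB ImB => hz hw.
have := cs2 (Re z) (Im z) (- Im w) (Re w).
nra.
Qed.

Lemma side_diff1 x b y z : (side x b z - side x y z) ^+ 2 <= nsq (b - y) * nsq (z - x).
Proof.
have -> : side x b z - side x y z = (Re b - Re y) * (Im z - Im x) - (Im b - Im y) * (Re z - Re x).
  by rewrite /side; ring.
by rewrite /nsq !ReB !ImB; apply: cs2.
Qed.

Lemma side_diff2 x b z w : (side x b w - side x b z) ^+ 2 <= nsq (b - x) * nsq (w - z).
Proof.
have -> : side x b w - side x b z = (Re b - Re x) * (Im w - Im z) - (Im b - Im x) * (Re w - Re z).
  by rewrite /side; ring.
by rewrite /nsq !ReB !ImB; apply: cs2.
Qed.

Lemma sq_bound (D m : R) : 0 <= m -> D ^+ 2 <= m ^+ 2 -> - m <= D <= m.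
Proof. move=> hm h; apply/andP; split; nra. Qed.

Lemma sigmaE d z : sigma d z = z ^+ d. Proof. by []. Qed.

Lemma nsq_sigma d z : nsq z = 1 -> nsq (sigma d z) = 1.
Proof. exact: nsq_expr. Qed.

Lemma nsq_neq0 z : nsq z = 1 -> z != 0.
Proof. by move=> h; apply/eqP => e; move: h; rewrite e /nsq Re0 Im0 expr0n addr0 => /eqP; rewrite eq_sym oner_eq0. Qed.
Lemma sq_le (a b : R) : 0 <= a -> a <= b -> a ^+ 2 <= b ^+ 2.
Proof. move=> h1 h2; nra. Qed.
Lemma side_sgn x w t (G : R) : nsq x = 1 -> nsq w = 1 -> nsq t = 1 -> 0 <= Re t ->
  - G <= Im t -> Im t <= G -> G < 1 - cosr x w -> Im t != 0 ->
  side x w (x * t) * Im t < 0.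
Proof.
move=> hx hw ht hr h1 h2 hG hi.
have [hA hB] := side_rot hx hw ht hr ltac:(lra) ltac:(lra).
case: (ltrgtP (Im t) 0) => hs.
- by have := hB hs; nra.
- by have := hA hs; nra.
- by move: hi; rewrite hs eqxx.
Qed.

Lemma sgn_combine (s1 s2 B I2 : R) : s1 * (- B) < 0 -> s2 * I2 < 0 -> 0 < B * I2 -> s1 * s2 < 0.
Proof. move=> h1 h2 h3; nra. Qed.

Lemma sgn_combine2 (s1 s2 I1 I2 : R) : s1 * I1 < 0 -> s2 * I2 < 0 -> I1 * I2 < 0 -> s1 * s2 < 0.
Proof. move=> h1 h2 h3; nra. Qed.
Lemma prod_pos (a b : R) : a != 0 -> b != 0 -> ~ (a * b < 0) -> 0 < a * b.
Proof.
move=> ha hb h; rewrite lt_def mulf_neq0 //= leNgt; apply/negP => h2; exact: h h2.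
Qed.
Lemma sgn_combine3 (s1 s2 I1 I2 : R) : s1 * I1 < 0 -> s2 * I2 < 0 -> 0 < I1 * I2 -> 0 < s1 * s2.
Proof. move=> h1 h2 h3; nra. Qed.

Lemma sgn_prod_neg (A B I1 I2 : R) : 0 < A * I1 -> 0 < B * I2 -> A * B < 0 -> I1 * I2 < 0.
Proof. move=> h1 h2 h3; nra. Qed.
Lemma nsq_tri p q x : nsq (p - x) <= 2 * nsq (p - q) + 2 * nsq (q - x).
Proof.
have sq2 : forall al be ga : R, (al - ga) ^+ 2 <= 2 * (al - be) ^+ 2 + 2 * (be - ga) ^+ 2.
  move=> al be ga.
  have e1 : 2 * (al - be) ^+ 2 + 2 * (be - ga) ^+ 2 - (al - ga) ^+ 2 = (al - 2 * be + ga) ^+ 2 by ring.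
  have := sqr_ge0 (al - 2 * be + ga); lra.
rewrite /nsq !ReB !ImB.
have := sq2 (Re p) (Re q) (Re x); have := sq2 (Im p) (Im q) (Im x); lra.
Qed.

Lemma nsq_subC z w : nsq (z - w) = nsq (w - z).
Proof. by rewrite /nsq !ReB !ImB; ring. Qed.

Lemma nsq_xy x y : nsq x = 1 -> nsq y = 1 -> nsq (x - y) = 2 * (1 - cosr x y).
Proof.
move=> hx hy; have -> : nsq (x - y) = nsq x + nsq y - 2 * cosr x y.
  by rewrite /nsq /cosr !ReB !ImB; ring.
by rewrite hx hy; ring.
Qed.

Lemma nc_le_of_nsq z (e : R) : 0 <= e -> nsq z <= e ^+ 2 -> nc z <= e.
Proof.
move=> he h; have h1 := nc_sq z; have h2 := nc_ge0 z.
rewrite -h1 in h; nra.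
Qed.
End S.

Section S.
Variable R : realType.
Local Notation C := R[i].
Local Notation Re := complex.Re.
Local Notation Im := complex.Im.
Local Notation nc := Normc.normc.

Lemma iter_same d p x y : (0 < p)%N -> sigma d x = sigma d y ->
  iter p (sigma d) y = iter p (sigma d) x :> C.
Proof. by case: p => // p _ h; rewrite !iterSr h. Qed.

Lemma sum_ind (n : nat) (j : 'I_n) : (\sum_(i < n) ((i == j) : nat) = 1)%N.
Proof. by rewrite (bigD1 j) //= eqxx big1 // => i /negbTE ->. Qed.

Lemma sum_indc (n : nat) (j : 'I_n) c : (\sum_(i < n) ((i == j) * c) = c)%N.
Proof. by rewrite (bigD1 j) //= eqxx mul1n big1 ?addn0 // => i /negbTE ->. Qed.

Lemma case5 (d : nat) (L : C -> C -> Prop) (x y v : C) (p : nat) (mu eps : R) :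
 (2 <= d)%N ->
 (forall a b, leaf L a b -> on_circle a /\ on_circle b) ->
 (forall a b c e, leaf L a b -> leaf L c e -> ~ cross a b c e) ->
 (forall a b, leaf L a b -> leaf L (sigma d a) (sigma d b)) ->
 (forall a b, leaf L a b -> ~ critical d a b ->
         exists f : 'I_d -> C * C,
           [/\ (forall i, leaf L (f i).1 (f i).2),
               (forall i : 'I_d, nat_of_ord i = 0%N -> same_chord (f i).1 (f i).2 a b),
               (forall i j, i <> j -> forall z, seg (f i).1 (f i).2 z -> seg (f j).1 (f j).2 z -> False) &
               (forall i, same_chord (sigma d (f i).1) (sigma d (f i).2) (sigma d a) (sigma d b))]) ->
 nsq x = 1 -> nsq y = 1 -> x <> y -> sigma d x = sigma d y ->
 iter p (sigma d) x = x -> (0 < p)%N ->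
 nsq v = 1 -> Im v != 0 -> nc (v - 1) <= eps ->
 (d ^ p * d)%N%:R * eps <= (1 - cosr x y) / 16 -> (d ^ p * d)%N%:R * eps <= mu / 16 -> 0 < mu ->
 (forall z, nsq z = 1 -> sigma d z = sigma d x -> z <> x -> z <> y -> mu <= `|side x y z|) ->
 leaf L x (y * v) -> False.
Proof.
move=> hd hcirc hnc h1 h3 hx hy hxy hsig hper hp hv hB hde hKg hKmu hmu hroot hl.
have circ : forall a b, leaf L a b -> nsq a = 1 /\ nsq b = 1.
  by move=> a b /hcirc [/circleE ? /circleE ?].
set N := (d ^ p)%N in hKg hKmu.
set K := (N * d)%N in hKg hKmu.
have hd0 : (0 < d)%N by apply: leq_trans hd.
have hN : (d <= N)%N by rewrite /N -{1}(expn1 d) leq_pexp2l.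
have hKN : (N <= K)%N by rewrite /K leq_pmulr.
have hKd : (d <= K)%N by apply: leq_trans hN hKN.
have hK2d : (2 * d <= K)%N by rewrite /K leq_mul // (leq_trans hd hN).
set g := 1 - cosr x y in hKg.
have hg2 : g <= 2.
  have := angcos hx hy; rewrite /g; nra.
set B := Im v.
have hB2 : 0 < B * B by rewrite -expr2 lt_def sqrf_eq0 hB sqr_ge0.
set dl := nc (v - 1).
have hdl0 : 0 <= dl by apply: nc_ge0.
have hK1 : 1 <= K%:R :> R by rewrite ler1n; apply: leq_trans hKd.
have hKdl : K%:R * dl <= K%:R * eps by apply: ler_wpM2l => //; lra.
have hKh : K%:R * dl <= 1 / 2 by lra.
have hgpos : 0 < g.
  have hxy2 : 0 < nsq (x - y) by apply: nsqB_gt0.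
  move: hxy2; rewrite /g /cosr /nsq ReB ImB; move: hx hy; rewrite /nsq; nra.
have pw : forall k, (0 < k)%N -> (k <= K)%N -> 0 < B * Im (v ^+ k).
  by move=> k hk hkK; apply: (pow_sign hv hKh).
have pwn1 : forall k, (0 < k)%N -> (k <= K)%N -> v ^+ k != 1.
  move=> k hk hkK; apply/eqP => e; have := pw k hk hkK; rewrite e Im1 mulr0 ltxx //.
set b := y * v.
set eta := v ^+ N.
have hb : nsq b = 1 by rewrite /b nsqM hy hv mulr1.
have heta : nsq eta = 1 by apply: nsq_expr.
have hxeta : nsq (x * eta) = 1 by rewrite nsqM hx heta mulr1.
have hsx0 : sigma d x != 0 by apply: nsq_neq0; apply: nsq_sigma.
have hsxeta : sigma d (x * eta) = sigma d x * v ^+ K.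
  by rewrite sigmaM /eta -exprM.
have hsb : sigma d b = sigma d x * v ^+ d by rewrite /b sigmaM hsig.
have hne1 : sigma d x <> sigma d (x * eta).
  move=> e; move: e; rewrite hsxeta => /esym /eqP.
  rewrite -{2}(mulr1 (sigma d x)) (can_eq (mulKf hsx0)) => /eqP e.
  by move: (pwn1 K (leq_trans hd0 hKd) (leqnn K)); rewrite e eqxx.
have hbx : sigma d b <> sigma d x.
  rewrite hsb => /eqP; rewrite -{2}(mulr1 (sigma d x)) (can_eq (mulKf hsx0)).
  by move/eqP => e; move: (pwn1 d hd0 hKd); rewrite e eqxx.
have hbxe : sigma d b <> sigma d (x * eta).
  rewrite hsb hsxeta => /eqP; rewrite (can_eq (mulKf hsx0)) => /eqP e.
  have hKd' : K = (d + (K - d))%N by rewrite subnKC.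
  move: e; rewrite hKd' exprD -{1}(mulr1 (v ^+ d)) => /eqP.
  rewrite (can_eq (mulKf _)); last by apply: nsq_neq0; apply: nsq_expr.
  move=> /eqP e.
  have hk1 : (0 < K - d)%N.
    by rewrite subn_gt0; apply: leq_trans hK2d; rewrite mul2n -addnn -addn1 leq_add2l.
  by have := pwn1 (K - d)%N hk1 (leq_subr _ _); rewrite -e eqxx.
have hm : leaf L x (x * eta).
  have := iter_leaf p h1 hl.
  by rewrite hper /b iter_sigmaM (iter_same hp hsig) hper.
have hncrit : ~ critical d x (x * eta) by case.
have [f [hf1 hf2 hf3 hf4]] := h3 _ _ hm hncrit.
set P := fun i => if sigma d (f i).1 == sigma d x then (f i).1 else (f i).2.
set Q := fun i => if sigma d (f i).1 == sigma d x then (f i).2 else (f i).1.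
have hPQ : forall i, [/\ sigma d (P i) = sigma d x, sigma d (Q i) = sigma d (x * eta),
    seg (f i).1 (f i).2 (P i), seg (f i).1 (f i).2 (Q i) & leaf L (P i) (Q i)].
  move=> i; rewrite /P /Q; case: (hf4 i) => [[e1 e2]|[e1 e2]].
  - rewrite e1 eqxx; split => //; first [exact: seg_left | exact: seg_right | exact: hf1].
  - have -> : (sigma d (f i).1 == sigma d x) = false by rewrite e1; apply/eqP => /esym.
    split => //; first [exact: seg_left | exact: seg_right | exact: (leaf_sym (hf1 i))].
have hPinj : injective P.
  move=> i j e; case: (eqVneq i j) => // /eqP hij; exfalso.
  apply: (hf3 i j hij (P i)); first by case: (hPQ i).
  by rewrite e; case: (hPQ j).
have hQinj : injective Q.
  move=> i j e; case: (eqVneq i j) => // /eqP hij; exfalso.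
  apply: (hf3 i j hij (Q i)); first by case: (hPQ i).
  by rewrite e; case: (hPQ j).
have hPc : forall i, nsq (P i) = 1 by move=> i; case: (hPQ i) => _ _ _ _ /circ [].
have hQc : forall i, nsq (Q i) = 1 by move=> i; case: (hPQ i) => _ _ _ _ /circ [].
set i0 : 'I_d := Ordinal hd0.
have [hP0 hQ0] : P i0 = x /\ Q i0 = x * eta.
  rewrite /P /Q; case: (hf2 i0 erefl) => [[e1 e2]|[e1 e2]].
  - by rewrite e1 eqxx.
  - have -> : (sigma d (f i0).1 == sigma d x) = false.
      by rewrite e1; apply/eqP => /esym.
    by [].
have hby : nc (b - y) = dl.
  have -> : b - y = y * (v - 1) by rewrite /b mulrBr mulr1.
  by rewrite Normc.normcM (nc1 hy) mul1r.
have hcb := cosr_near b y hx; rewrite hby (cosrC y x) in hcb.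
move/andP: hcb => [hcb1 hcb2].
have hgdef : g = 1 - cosr x y by [].
have hdlK : dl <= K%:R * dl by rewrite -{1}(mul1r dl); apply: ler_wpM2r.
have hdlg : dl <= g / 16 by lra.
have hbnx : b <> x by move=> e; apply: hbx; rewrite e.
have hbny : b <> y by move=> e; apply: hbx; rewrite e hsig.
set s0 := side x b y.
have hs0 : s0 != 0.
  apply/eqP => e; have [e1|e1] := line_circle hx hb hy (nesym hbnx) e.
  - by apply: hxy.
  - by apply: hbny.
have hN1 : (0 < N.-1)%N by rewrite -ltnS prednK ?(leq_trans hd0 hN) //; apply: leq_trans hd hN.
have hN1K : (N.-1 <= K)%N by apply: leq_trans (leq_pred _) hKN.
have hyb : y = b * v^* by rewrite /b -mulrA conjM1 // mulr1.
have hyeta : y * eta = b * v ^+ N.-1.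
  by rewrite /b /eta -mulrA -exprS prednK // (leq_trans hd0 hN).
have [hre1 /andP[hi1 hi2]] := pow_re (k:=1) hv hKh (leq_trans hd0 hKd).
rewrite expr1 in hre1 hi1 hi2.
have [hreN /andP[hiN1 hiN2]] := pow_re (k:=N.-1) hv hKh hN1K.
rewrite -/dl in hi1 hi2 hiN1 hiN2.
have hvJ : nsq (v^* ) = 1 by rewrite nsqJ.
have hBle : - dl <= B <= dl by have := Im_le (v - 1); rewrite ImB Im1 subr0.
move/andP: hBle => [hB1 hB2'].
have hG : K%:R * dl < 1 - cosr b x by clear - hcb2 hgdef hKdl hKg hdlg hgpos; lra.
have hF4 : s0 * side x b (y * eta) < 0.
  rewrite /s0 {1}hyb hyeta !(sideN b x) mulrNN.
  have hp1 := pw _ hN1 hN1K.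
  have hI1 : Im (v^* ) != 0 by rewrite ImJ oppr_eq0.
  have hI2 : Im (v ^+ N.-1) != 0.
    by apply/eqP => e; move: hp1; rewrite e mulr0 ltxx.
  have c1 : 0 <= Re (v^* ) by rewrite ReJ; clear - hre1; lra.
  have c2 : - (K%:R * dl) <= Im (v^* ) by rewrite ImJ; clear - hB2' hdlK; lra.
  have c3 : Im (v^* ) <= K%:R * dl by rewrite ImJ; clear - hB1 hdlK; lra.
  have s1 := side_sgn hb hx hvJ c1 c2 c3 hG hI1.
  have c4 : 0 <= Re (v ^+ N.-1) by clear - hreN; lra.
  have s2 := side_sgn hb hx (nsq_expr N.-1 hv) c4 hiN1 hiN2 hG hI2.
  rewrite ImJ in s1.
  exact: sgn_combine s1 s2 hp1.
have hetad : nc (eta - 1) <= K%:R * dl.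
  apply: le_trans (nc_pow N hv) _; apply: ler_wpM2r => //; by rewrite ler_nat.
have hF2 : forall z, nsq z = 1 -> sigma d z = sigma d x -> z <> x -> z <> y ->
    (0 < side x b (z * eta) * s0) = (0 < side x b z * s0).
  move=> z hz hsz hzx hzy.
  have hmz := hroot z hz hsz hzx hzy.
  have e1 := side_diff1 x b y z.
  rewrite -nc_sq hby in e1.
  have hzx4 := nsq_sub_le4 hz hx.
  have e2 := side_diff2 x b z (z * eta).
  have hbx4 := nsq_sub_le4 hb hx.
  have e3 : nsq (z * eta - z) = nsq (eta - 1).
    by rewrite -{2}(mulr1 z) -mulrBr nsqM hz mul1r.
  rewrite e3 -(nc_sq (eta - 1)) in e2.
  have hetan := nc_ge0 (eta - 1).
  have hKdl0 : 0 <= K%:R * dl by apply: mulr_ge0 => //; apply: ler0n.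
  have b1 : (side x b z - side x y z) ^+ 2 <= (2 * dl) ^+ 2.
    apply: le_trans e1 _; rewrite exprMn mulrC.
    by apply: ler_wpM2r; [apply: sqr_ge0 | clear - hzx4; lra].
  have b2 : (side x b (z * eta) - side x b z) ^+ 2 <= (2 * (K%:R * dl)) ^+ 2.
    apply: le_trans e2 _; rewrite exprMn.
    apply: ler_pM; [apply: nsq_ge0 | apply: sqr_ge0 | clear - hbx4; lra | ].
    exact: sq_le hetan hetad.
  have := sq_bound _ b1; have := sq_bound _ b2.
  move=> /(_ ltac:(clear - hKdl0; lra)) /andP[c1 c2] /(_ ltac:(clear - hdl0; lra)) /andP[c3 c4].
  apply: sign_same => //.
  move: hmz; rewrite ler_normr => /orP[hm1|hm1].
  - have q1 : 0 < side x b z by clear - hm1 c3 c4 hdlK hKdl hKmu hmu; lra.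
    have q2 : 0 < side x b (z * eta) by clear - hm1 c1 c2 c3 c4 hdlK hKdl hKmu hmu; lra.
    exact: mulr_gt0.
  - have q1 : side x b z < 0 by clear - hm1 c3 c4 hdlK hKdl hKmu hmu; lra.
    have q2 : side x b (z * eta) < 0 by clear - hm1 c1 c2 c3 c4 hdlK hKdl hKmu hmu; lra.
    by rewrite -mulrNN; apply: mulr_gt0; rewrite oppr_gt0.
have hl' : leaf L x b by [].
have hsPx : forall i, sigma d (P i) = sigma d x by move=> i; case: (hPQ i).
have hsQ : forall i, sigma d (Q i) = sigma d (x * eta) by move=> i; case: (hPQ i).
have hPQl : forall i, leaf L (P i) (Q i) by move=> i; case: (hPQ i).
have hxb : x <> b by apply: nesym.
have hF1 : forall i, i != i0 ->
    (0 < side x b (P i) * s0) = (0 < side x b (Q i) * s0).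
  move=> i hi.
  have hPx : P i <> x.
    by move=> e; have eq := hPinj i i0 (etrans e (esym hP0)); rewrite eq eqxx in hi.
  have hQx : Q i <> x by move=> e; apply: hne1; rewrite -(hsQ i) e.
  have hPb : P i <> b by move=> e; apply: hbx; rewrite -e hsPx.
  have hQb : Q i <> b by move=> e; apply: hbxe; rewrite -e hsQ.
  have nP : side x b (P i) != 0.
    by apply/eqP => e; case: (line_circle hx hb (hPc i) hxb e).
  have nQ : side x b (Q i) != 0.
    by apply/eqP => e; case: (line_circle hx hb (hQc i) hxb e).
  apply: sign_same => //.
  apply: prod_pos => // hneg.
  exact: (hnc _ _ _ _ hl' (hPQl i) (cross_sides hx hb (hPc i) (hQc i) hneg)).
have [iy hiy] : exists iy, P iy = y.
  apply: (roots_surj (c := sigma d x) hd0 hPinj); [exact: hsPx | exact: esym hsig].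
have hiy0 : iy != i0 by apply/eqP => e; apply: hxy; rewrite -hiy e hP0.
have hex : forall i : 'I_d, exists j : 'I_d, Q j = P i * eta.
  move=> i.
  apply: (roots_surj (c := sigma d (x * eta)) hd0 hQinj); first exact: hsQ.
  by rewrite -sigmaE sigmaM hsPx -sigmaM.
have [gf hgf] := fin_all_exists hex.
have hgfinj : injective gf.
  move=> i j e; apply: hPinj; apply: (mulIf (nsq_neq0 heta)).
  by rewrite -!hgf e.
pose pos := fun z => (0 < side x b z * s0).
have posx : pos x = false by rewrite /pos side_a mul0r ltxx.
have posy : pos y = true.
  by rewrite /pos -/s0 lt_def mulf_neq0 //= -expr2 sqr_ge0.
have posye : pos (y * eta) = false.
  by apply/negbTE; rewrite /pos -leNgt mulrC; apply/ltW.
have hiy0' : (i0 == iy) = false by rewrite eq_sym; apply/negbTE.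
have pw1 : forall i, (pos (P i * eta)%R + (i == iy) = pos (P i) + (i == i0) * pos (x * eta)%R)%N.
  move=> i; case: (eqVneq i i0) => [->|hi0].
  - by rewrite hP0 hiy0' posx /= addn0 mul1n.
  case: (eqVneq i iy) => [->|hiy'].
  - by rewrite hiy posye posy ?(negbTE hiy0) ?eqxx.
  rewrite ?(negbTE hi0) ?(negbTE hiy') mul0n !addn0.
  have hPx : P i <> x.
    by move=> e; have eq := hPinj i i0 (etrans e (esym hP0)); rewrite eq eqxx in hi0.
  have hPy : P i <> y.
    by move=> e; have eq := hPinj i iy (etrans e (esym hiy)); rewrite eq eqxx in hiy'.
  by rewrite /pos (hF2 (P i) (hPc i) (hsPx i) hPx hPy).
have pw2 : forall i, (pos (Q i) : nat) = (pos (P i) + (i == i0) * pos (x * eta)%R)%N.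
  move=> i; case: (eqVneq i i0) => [->|hi0].
  - by rewrite hP0 hQ0 posx /= mul1n.
  by rewrite ?(negbTE hi0) mul0n addn0 /pos (hF1 i hi0).
have S1 : (\sum_(i < d) (pos (P i * eta)%R : nat) + 1 = \sum_(i < d) (pos (P i) : nat) + pos (x * eta)%R)%N.
  rewrite -(sum_ind iy) -big_split /= (eq_bigr _ (fun i _ => pw1 i)) big_split /=.
  by rewrite sum_indc.
have S2 : (\sum_(i < d) (pos (Q i) : nat) = \sum_(i < d) (pos (P i) : nat) + pos (x * eta)%R)%N.
  by rewrite (eq_bigr _ (fun i _ => pw2 i)) big_split /= sum_indc.
have S3 : (\sum_(i < d) (pos (Q i) : nat) = \sum_(i < d) (pos (P i * eta)%R : nat))%N.
  rewrite (reindex_inj hgfinj) /=.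
  by apply: eq_bigr => i _; rewrite hgf.
rewrite S3 in S2; rewrite -S2 in S1.
by move/eqP: S1; rewrite -{2}(addn0 (\sum_(i < d) _)) eqn_add2l.
Qed.
End S.

Section S.
Variable R : realType.
Local Notation C := R[i].
Local Notation Re := complex.Re.
Local Notation Im := complex.Im.
Local Notation nc := Normc.normc.

Lemma core (d : nat) (L : C -> C -> Prop) (x y a b : C) (p : nat) (mu eps : R) :
 (2 <= d)%N ->
 (forall a b, leaf L a b -> on_circle a /\ on_circle b) ->
 (forall a b c e, leaf L a b -> leaf L c e -> ~ cross a b c e) ->
 (forall a b, leaf L a b -> leaf L (sigma d a) (sigma d b)) ->
 (forall a b, leaf L a b -> ~ critical d a b ->
         exists f : 'I_d -> C * C,
           [/\ (forall i, leaf L (f i).1 (f i).2),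
               (forall i : 'I_d, nat_of_ord i = 0%N -> same_chord (f i).1 (f i).2 a b),
               (forall i j, i <> j -> forall z, seg (f i).1 (f i).2 z -> seg (f j).1 (f j).2 z -> False) &
               (forall i, same_chord (sigma d (f i).1) (sigma d (f i).2) (sigma d a) (sigma d b))]) ->
 nsq x = 1 -> nsq y = 1 -> x <> y -> sigma d x = sigma d y ->
 iter p (sigma d) x = x -> (0 < p)%N ->
 leaf L x y -> leaf L a b -> ~ same_chord a b x y ->
 nc (a - x) <= eps -> nc (b - y) <= eps ->
 (d ^ p * d)%N%:R * eps <= (1 - cosr x y) / 16 -> (d ^ p * d)%N%:R * eps <= mu / 16 -> 0 < mu ->
 (forall z, nsq z = 1 -> sigma d z = sigma d x -> z <> x -> z <> y -> mu <= `|side x y z|) ->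
 False.
Proof.
move=> hd hcirc hnc h1 h3 hx hy hxy hsig hper hp hlxy hlab hsc hax hby hKg hKmu hmu hroot.
have circ : forall a b, leaf L a b -> nsq a = 1 /\ nsq b = 1.
  by move=> a' b' /hcirc [/circleE ? /circleE ?].
have [ha hb] := circ _ _ hlab.
set N := (d ^ p)%N in hKg hKmu.
set K := (N * d)%N in hKg hKmu.
have hd0 : (0 < d)%N by apply: leq_trans hd.
have hN : (d <= N)%N by rewrite /N -{1}(expn1 d) leq_pexp2l.
have hKN : (N <= K)%N by rewrite /K leq_pmulr.
have hN0 : (0 < N)%N by apply: leq_trans hd0 hN.
have hN1 : (0 < N.-1)%N by rewrite -ltnS prednK //; apply: leq_trans hd hN.
have hN1K : (N.-1 <= K)%N by apply: leq_trans (leq_pred _) hKN.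
set g := 1 - cosr x y in hKg.
have hgdef : g = 1 - cosr x y by [].
have hg2 : g <= 2 by have := angcos hx hy; rewrite /g; nra.
have hgpos : 0 < g.
  have hxy2 : 0 < nsq (x - y) by apply: nsqB_gt0.
  move: hxy2; rewrite /g /cosr /nsq ReB ImB; move: hx hy; rewrite /nsq; nra.
have hK1 : 1 <= K%:R :> R by rewrite ler1n; apply: leq_trans hKN.
set u := a * x^*.
set v := b * y^*.
have hu : nsq u = 1 by apply: nsq_rot.
have hv : nsq v = 1 by apply: nsq_rot.
have hxu : x * u = a by rewrite /u crotK.
have hyv : y * v = b by rewrite /v crotK.
have hdu : nc (u - 1) <= eps by rewrite /u nc_rot1.
have hdv : nc (v - 1) <= eps by rewrite /v nc_rot1.
set G := K%:R * eps in hKg hKmu *.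
have heps0 : 0 <= eps by have h0 := nc_ge0 (u - 1); clear - hdu h0; lra.
have hG0 : 0 <= G by apply: mulr_ge0 => //; apply: ler0n.
have hepsG : eps <= G by rewrite /G -{1}(mul1r eps); apply: ler_wpM2r.
have hKu : K%:R * nc (u - 1) <= G by apply: ler_wpM2l => //; apply: ler0n.
have hKv : K%:R * nc (v - 1) <= G by apply: ler_wpM2l => //; apply: ler0n.
have hKuh : K%:R * nc (u - 1) <= 1 / 2 by clear - hKu hKg hg2; lra.
have hKvh : K%:R * nc (v - 1) <= 1 / 2 by clear - hKv hKg hg2; lra.
have hGg : G < g by clear - hKg hgpos; lra.
have hGg2 : G <= g / 16 by [].
have [hreu _] := pow_re (k:=1) hu hKuh (leq_trans hd0 (leq_trans hN hKN)).
have [hrev _] := pow_re (k:=1) hv hKvh (leq_trans hd0 (leq_trans hN hKN)).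
rewrite expr1 in hreu hrev.
have hIu : - G <= Im u <= G.
  have := Im_le (u - 1); rewrite ImB Im1 subr0 => /andP[h1' h2'].
  by apply/andP; split; clear - h1' h2' hdu hepsG; lra.
have hIv : - G <= Im v <= G.
  have := Im_le (v - 1); rewrite ImB Im1 subr0 => /andP[h1' h2'].
  by apply/andP; split; clear - h1' h2' hdv hepsG; lra.
move/andP: hIu => [hIu1 hIu2]; move/andP: hIv => [hIv1 hIv2].
have hcyx : G < 1 - cosr y x by rewrite cosrC.
have ha' : iter p (sigma d) a = x * u ^+ N by rewrite -hxu iter_sigmaM hper.
have hb' : iter p (sigma d) b = x * v ^+ N.
  by rewrite -hyv iter_sigmaM (iter_same hp hsig) hper.
have hlm : leaf L (x * u ^+ N) (x * v ^+ N) by rewrite -ha' -hb'; apply: iter_leaf.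
have hre_u0 : 0 <= Re u by clear - hreu; lra.
have hre_v0 : 0 <= Re v by clear - hrev; lra.
have hc2 : 0 < Im u * Im v -> False.
  move=> hAB.
  have hIu0 : Im u != 0 by apply/eqP => e; move: hAB; rewrite e mul0r ltxx.
  have hIv0 : Im v != 0 by apply/eqP => e; move: hAB; rewrite e mulr0 ltxx.
  have s1 := side_sgn hx hy hu hre_u0 hIu1 hIu2 hGg hIu0.
  have s2 := side_sgn hy hx hv hre_v0 hIv1 hIv2 hcyx hIv0.
  rewrite hxu in s1; rewrite hyv in s2.
  have := sgn_combine3 s1 s2 hAB; rewrite (sideN x y b) mulrN oppr_gt0 => hneg.
  exact: (hnc _ _ _ _ hlxy hlab (cross_sides hx hy ha hb hneg)).
have hc3 : Im u * Im v < 0 -> False.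
  move=> hAB.
  have hIu0 : 0 < Im u * Im u.
    by rewrite -expr2 lt_def sqrf_eq0 sqr_ge0 andbT; apply/eqP => e; move: hAB; rewrite e mul0r ltxx.
  have hIv0 : 0 < Im v * Im v.
    by rewrite -expr2 lt_def sqrf_eq0 sqr_ge0 andbT; apply/eqP => e; move: hAB; rewrite e mulr0 ltxx.
  have pu := pow_sign hu hKuh hIu0 hN0 hKN.
  have pv := pow_sign hv hKvh hIv0 hN0 hKN.
  have [hr1 /andP[hb1 hb2]] := pow_re (k:=N) hu hKuh hKN.
  have [hr2 /andP[hb3 hb4]] := pow_re (k:=N) hv hKvh hKN.
  have n1 : Im (u ^+ N) != 0 by apply/eqP => e; move: pu; rewrite e mulr0 ltxx.
  have n2 : Im (v ^+ N) != 0 by apply/eqP => e; move: pv; rewrite e mulr0 ltxx.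
  have c1 : 0 <= Re (u ^+ N) by clear - hr1; lra.
  have c2 : - G <= Im (u ^+ N) by clear - hb1 hKu; lra.
  have c3 : Im (u ^+ N) <= G by clear - hb2 hKu; lra.
  have c4 : 0 <= Re (v ^+ N) by clear - hr2; lra.
  have c5 : - G <= Im (v ^+ N) by clear - hb3 hKv; lra.
  have c6 : Im (v ^+ N) <= G by clear - hb4 hKv; lra.
  have s1 := side_sgn hx hy (nsq_expr N hu) c1 c2 c3 hGg n1.
  have s2 := side_sgn hx hy (nsq_expr N hv) c4 c5 c6 hGg n2.
  have hneg := sgn_combine2 s1 s2 (sgn_prod_neg pu pv hAB).
  have hc1 : nsq (x * u ^+ N) = 1 by rewrite nsqM hx nsq_expr // mul1r.
  have hc2' : nsq (x * v ^+ N) = 1 by rewrite nsqM hx nsq_expr // mul1r.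
  exact: (hnc _ _ _ _ hlxy hlm (cross_sides hx hy hc1 hc2' hneg)).
have hv1 : Im v = 0 -> v = 1 by move=> h; apply: im0_one => //; clear - hrev; lra.
have hu1 : Im u = 0 -> u = 1 by move=> h; apply: im0_one => //; clear - hreu; lra.
have hc00 : Im u = 0 -> Im v = 0 -> False.
  move=> /hu1 e1 /hv1 e2; apply: hsc; left.
  by split; [rewrite -hxu e1 mulr1 | rewrite -hyv e2 mulr1].
have hc5 : Im u = 0 -> Im v != 0 -> False.
  move=> /hu1 e1 hIv0.
  have eax : a = x by rewrite -hxu e1 mulr1.
  apply: (case5 hd hcirc hnc h1 h3 hx hy hxy hsig hper hp hv hIv0 hdv hKg hKmu hmu hroot).
  by rewrite hyv -eax.
have hc4 : Im v = 0 -> Im u != 0 -> False.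
  move=> /hv1 e2 hIu0.
  have eby : b = y by rewrite -hyv e2 mulr1.
  rewrite e2 expr1n mulr1 in hlm.
  have hIu2' : 0 < Im u * Im u by rewrite -expr2 lt_def sqrf_eq0 hIu0 sqr_ge0.
  have pu := pow_sign hu hKuh hIu2' hN1 hN1K.
  have [hr1 /andP[hb1 hb2]] := pow_re (k:=N.-1) hu hKuh hN1K.
  have n1 : Im (u ^+ N.-1) != 0 by apply/eqP => e; move: pu; rewrite e mulr0 ltxx.
  have hcn := cosr_near a x hy; move/andP: hcn => [hcn1 hcn2].
  have hGa : G < 1 - cosr a y.
    have h0 : nc (a - x) <= G by clear - hax hepsG; lra.
    by clear - hcn2 h0 hgdef hGg2 hgpos; lra.
  have c1 : 0 <= Re (u^* ) by rewrite ReJ.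
  have c2 : - G <= Im (u^* ) by rewrite ImJ; clear - hIu2; lra.
  have c3 : Im (u^* ) <= G by rewrite ImJ; clear - hIu1; lra.
  have n0 : Im (u^* ) != 0 by rewrite ImJ oppr_eq0.
  have huJ : nsq (u^* ) = 1 by rewrite nsqJ.
  have s1 := side_sgn ha hy huJ c1 c2 c3 hGa n0.
  have c4 : 0 <= Re (u ^+ N.-1) by clear - hr1; lra.
  have c5 : - G <= Im (u ^+ N.-1) by clear - hb1 hKu; lra.
  have c6 : Im (u ^+ N.-1) <= G by clear - hb2 hKu; lra.
  have s2 := side_sgn ha hy (nsq_expr N.-1 hu) c4 c5 c6 hGa n1.
  rewrite ImJ in s1.
  have hneg := sgn_combine s1 s2 pu.
  have e3 : a * u^* = x by rewrite -hxu -mulrA conjM1 // mulr1.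
  have e4 : a * u ^+ N.-1 = x * u ^+ N by rewrite -hxu -mulrA -exprS prednK.
  rewrite e3 e4 in hneg.
  have hc2' : nsq (x * u ^+ N) = 1 by rewrite nsqM hx nsq_expr // mul1r.
  apply: (hnc _ _ _ _ _ (leaf_sym hlm) (cross_sides ha hy hx hc2' hneg)).
  by rewrite -eby.
case: (ltrgtP (Im u) 0) => hA; case: (ltrgtP (Im v) 0) => hB.
- by apply: hc2; rewrite -mulrNN; apply: mulr_gt0; rewrite oppr_gt0.
- by apply: hc3; rewrite nmulr_rlt0.
- by apply: (hc4 hB); rewrite lt_eqF.
- by apply: hc3; rewrite pmulr_rlt0.
- by apply: hc2; apply: mulr_gt0.
- by apply: (hc4 hB); rewrite gt_eqF.
- by apply: (hc5 hA); rewrite lt_eqF.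
- by apply: (hc5 hA); rewrite gt_eqF.
- exact: hc00.
Qed.
End S.

Section S.
Variable R : realType.
Local Notation C := R[i].
Local Notation Re := complex.Re.
Local Notation Im := complex.Im.
Local Notation nc := Normc.normc.

Lemma main (d : nat) (L : C -> C -> Prop) (x y : C) :
  (2 <= d)%N -> sibling_invariant d L -> leaf L x y -> critical d x y ->
  periodic d x -> isolated L x y.
Proof.
move=> hd [[hcirc hnc hdeg hcl] h1 h2 h3] hlxy [hxy hsig] [p [hp hper]].
have circ : forall a b, leaf L a b -> nsq a = 1 /\ nsq b = 1.
  by move=> a' b' /hcirc [/circleE ? /circleE ?].
have [hx hy] := circ _ _ hlxy.
have hd0 : (0 < d)%N by apply: leq_trans hd.
(* the roots of sigma d z = sigma d x *)
have [f [hf1 _ hf3 hf4]] := h3 x x (hdeg x (proj2 (circleE x) hx)) (fun c => proj1 c erefl).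
set r := fun i => (f i).1.
have hr : forall i, sigma d (r i) = sigma d x.
  by move=> i; rewrite /r; case: (hf4 i) => [[-> _]|[-> _]].
have hrinj : injective r.
  move=> i j e; case: (eqVneq i j) => // /eqP hij; exfalso.
  apply: (hf3 i j hij (r i)); first exact: seg_left.
  by rewrite e; exact: seg_left.
have hrc : forall i, nsq (r i) = 1 by move=> i; have [] := circ _ _ (hf1 i).
set F := fun i => if (r i == x) || (r i == y) then 1 else `|side x y (r i)|.
have [mu [hmu hmuF]] : exists mu, 0 < mu /\ forall t, t \in enum 'I_d -> mu <= F t.
  apply: min_pos => i _; rewrite /F.
  case: ifP => [_|/norP[hix hiy]]; first exact: ltr01.
  rewrite normr_gt0; apply/eqP => e.
  have [e1|e1] := line_circle hx hy (hrc i) hxy e.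
  - by move: hix; rewrite e1 eqxx.
  - by move: hiy; rewrite e1 eqxx.
have hroot : forall z, nsq z = 1 -> sigma d z = sigma d x -> z <> x -> z <> y ->
    mu <= `|side x y z|.
  move=> z hz hsz hzx hzy.
  have [i hi] := roots_surj (c := sigma d x) hd0 hrinj hr hsz.
  have := hmuF i (mem_enum _ _); rewrite /F hi.
  have -> : (z == x) = false by apply/eqP.
  by have -> : (z == y) = false by apply/eqP.
set g := 1 - cosr x y.
have hgpos : 0 < g.
  have := nsq_xy hx hy; rewrite -/g => e.
  have := nsqB_gt0 hxy; rewrite e; lra.
have hg2 : g <= 2 by have := angcos hx hy; rewrite /g; nra.
set K := (d ^ p * d)%N.
have hK0 : (0 < K)%N by rewrite /K muln_gt0 expn_gt0 hd0.
have hKr : 0 < K%:R :> R by rewrite ltr0n.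
set m0 := Num.min g mu.
have hm0 : 0 < m0 by rewrite lt_min hgpos hmu.
have hm0g : m0 <= g by rewrite ge_min lexx.
have hm0mu : m0 <= mu by rewrite ge_min lexx orbT.
set eps := m0 / (16 * K%:R).
have hKe : K%:R * eps = m0 / 16 by rewrite /eps; field; rewrite pnatr_eq0 -lt0n.
have heps0 : 0 < eps by rewrite /eps divr_gt0 // mulr_gt0 // ltr0n.
have hKg : K%:R * eps <= (1 - cosr x y) / 16 by rewrite hKe -/g; lra.
have hKmu : K%:R * eps <= mu / 16 by rewrite hKe; lra.
have hepsK : eps <= K%:R * eps by rewrite -{1}(mul1r eps) ler_pM2r // ler1n.
have heps1 : eps <= 1 / 8 by clear - hepsK hKg hg2; rewrite -/g in hKg; lra.
set e := eps ^+ 2 / 10.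
have he0 : 0 < e by rewrite /e divr_gt0 // exprn_gt0.
have he1 : e <= 1 by rewrite /e; nra.
have h10e : 10 * e = eps ^+ 2 by rewrite /e; field.
move=> [u [hu hlim]].
have [N0 hN0] := hlim e he0.
have [_ hcl2] := hN0 N0 (leqnn N0).
have [hlab hsc] := hu N0.
set a0 := (u N0).1 in hlab hsc hcl2.
set b0 := (u N0).2 in hlab hsc hcl2.
have [ha hb] := circ _ _ hlab.
have near : forall z, nsq z = 1 -> seg x y z ->
    nsq (a0 - z) <= eps ^+ 2 \/ nsq (b0 - z) <= eps ^+ 2.
  move=> z hz hsz; have [w [hw1 hw2]] := hcl2 z hsz.
  by rewrite -h10e; apply: (seg_near ha hb hz hw1 hw2 he0 he1).
have far : forall c, nsq (c - x) <= eps ^+ 2 -> nsq (c - y) <= eps ^+ 2 -> False.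
  move=> c h1' h2'; have := nsq_tri x c y; rewrite nsq_xy // (nsq_subC x c) -/g.
  have hg16 : eps <= g / 16 by clear - hepsK hKg; rewrite -/g in hKg; lra.
  have : eps ^+ 2 <= 1 / 64 * g.
    rewrite expr2; clear - hg16 heps0 hg2 hgpos; nra.
  clear - h1' h2' hgpos; lra.
have hcore := fun a b => @core R d L x y a b p mu eps hd hcirc hnc h1 h3 hx hy hxy hsig hper hp hlxy.
have hnc' : forall z, nsq z <= eps ^+ 2 -> nc z <= eps.
  by move=> z hz; apply: nc_le_of_nsq => //; apply: ltW.
case: (near x hx (seg_left x y)) => hax; case: (near y hy (seg_right x y)) => hby.
- exact: (far a0).
- apply: (hcore a0 b0 hlab hsc (hnc' _ hax) (hnc' _ hby) hKg hKmu hmu hroot).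
- apply: (hcore b0 a0 (leaf_sym hlab) _ (hnc' _ hax) (hnc' _ hby) hKg hKmu hmu hroot).
  by case=> [[e1 e2]|[e1 e2]]; apply: hsc; [right|left].
- exact: (far b0).
Qed.
End S.

Theorem lemmal (R : realType) (d : nat) (L : R[i] -> R[i] -> Prop) (x y : R[i]) :
  (2 <= d)%N -> sibling_invariant d L -> leaf L x y -> critical d x y ->
  periodic d x -> isolated L x y.
Proof. exact: main. Qed.
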